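(* Let $\underline{q}_g\le\bar{q}_g$ and $\underline{v}\le\bar{v}$ be real constants and let $v_0\in[\underline{v},\bar{v}]$. Define the set \[ S:=\{(q,v):\underline{q}_g\le q\le\bar{q}_g,\ v=v_0\}\cup\{(q,v):q=\bar{q}_g,\ \underline{v}\le v\le v_0\}\cup\{(q,v):q=\underline{q}_g,\ v_0\le v\le\bar{v}\}\subseteq\mathbb{R}^2, \] and, for $\epsilon>0$, let $S^\epsilon$ be the set of all $(q,v)\in\mathbb{R}^2$ for which there exist $v^+,v^-\in[0,\bar{v}-\underline{v}]$ such that \begin{align*} &v=v_0+v^+-v^-,\\ &v^+-\epsilon\ln\left[1+\exp\left(\frac{v^+-q+\underline{q}_g}{\epsilon}\right)\right]\le\epsilon\ln 2,\\ &v^--\epsilon\ln\left[1+\exp\left(\frac{v^-+q-\bar{q}_g}{\epsilon}\right)\right]\le\epsilon\ln 2,\\ &\underline{q}_g\le q\le\bar{q}_g,\quad \underline{v}\le v\le\bar{v}. \end{align*} Then for every $\epsilon>0$ we have $S\subseteq S^\epsilon$, and \[ \sup_{(q,v)\in S^\epsilon}\ \inf_{(q',v')\in S}\|(q,v)-(q',v')\|\to 0\quad\text{as }\epsilon\to 0. \]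
   Context: In the application, $q$ is the reactive power output of a generator in a contingency, $v$ the voltage magnitude at its bus in the contingency, $v_0$ the base-case voltage magnitude at that bus, $[\underline{q}_g,\bar{q}_g]$ the reactive power bounds and $[\underline{v},\bar{v}]$ the voltage bounds. The set $S$ models the disjunctive voltage/reactive-power response and $S^\epsilon$ is its smooth relaxation. *)

(* Defs.v *)
From HB Require Import structures.
From mathcomp Require Import all_boot all_order all_algebra.
From mathcomp Require Import all_classical all_reals all_analysis.
Set Implicit Arguments. Unset Strict Implicit. Unset Printing Implicit Defensive.
Import Order.TTheory GRing.Theory Num.Theory.
Import numFieldNormedType.Exports.
Local Open Scope classical_set_scope.
Local Open Scope ring_scope.

Definition Sset (R : realType) (qlo qhi vlo vhi v0 : R) : set (R * R) :=
  [set p | (qlo <= p.1 <= qhi /\ p.2 = v0)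
        \/ (p.1 = qhi /\ vlo <= p.2 <= v0)
        \/ (p.1 = qlo /\ v0 <= p.2 <= vhi)].

Definition Seps (R : realType) (qlo qhi vlo vhi v0 eps : R) : set (R * R) :=
  [set p | exists vp vm : R,
      (0 <= vp <= vhi - vlo) /\ (0 <= vm <= vhi - vlo) /\
      p.2 = v0 + vp - vm /\
      vp - eps * ln (1 + expR ((vp - p.1 + qlo) / eps)) <= eps * ln 2 /\
      vm - eps * ln (1 + expR ((vm + p.1 - qhi) / eps)) <= eps * ln 2 /\
      (qlo <= p.1 <= qhi) /\ (vlo <= p.2 <= vhi)].

Definition dist2 (R : realType) (p p' : R * R) : R :=
  Num.sqrt ((p.1 - p'.1) ^+ 2 + (p.2 - p'.2) ^+ 2).

Definition deviation (R : realType) (qlo qhi vlo vhi v0 eps : R) : \bar R :=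
  ereal_sup [set ereal_inf [set (dist2 p p')%:E | p' in Sset qlo qhi vlo vhi v0]
            | p in Seps qlo qhi vlo vhi v0 eps].

(* Main.v *)
Require Import Defs.
From HB Require Import structures.
From mathcomp Require Import all_boot all_order all_algebra.
From mathcomp Require Import all_classical all_reals all_analysis.
From mathcomp Require Import ring lra.
Import Order.TTheory GRing.Theory Num.Theory.
Import numFieldNormedType.Exports.
Local Open Scope classical_set_scope.
Local Open Scope ring_scope.

Section Aux.
Set Implicit Arguments.
Variable R : realType.

Lemma ln1p_ge (y : R) : y <= ln (1 + expR y).
Proof.
rewrite -{1}(expRK y) ler_ln ?posrE ?expR_gt0 ?addr_gt0 ?ltr01 //.
  by rewrite lerDr ler01.
exact: expR_gt0.
Qed.

Lemma ln1p_le_neg (y : R) : y <= 0 -> ln (1 + expR y) <= ln 2.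
Proof.
move=> hy; rewrite ler_ln ?posrE ?addr_gt0 ?ltr01 ?expR_gt0 //.
have : expR y <= 1 by rewrite expR_le1.
lra.
Qed.

Lemma ln1p_le_pos (y : R) : 0 <= y -> ln (1 + expR y) <= y + ln 2.
Proof.
move=> hy; rewrite -{2}(expRK y) -lnM ?posrE ?expR_gt0 //.
rewrite ler_ln ?posrE ?addr_gt0 ?ltr01 ?expR_gt0 ?mulr_gt0 //.
  have := expR_ge1Dx y; lra.
exact: expR_gt0.
Qed.

Lemma ln2_gt0 : 0 < ln (2 : R).
Proof. by apply: ln_gt0; rewrite ltr1n. Qed.

Lemma key (eps x c : R) : 0 < eps ->
  x - eps * ln (1 + expR ((x - c) / eps)) <= eps * ln 2 ->
  x <= 2 * eps * ln 2 \/ c <= 2 * eps * ln 2.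
Proof.
move=> he H.
have E : eps * ((x - c) / eps) = x - c by rewrite mulrC divfK // gt_eqF.
have [xc|cx] := lerP x c.
  left.
  have h1 : (x - c) / eps <= 0 by rewrite pmulr_lle0 ?invr_gt0 // subr_le0.
  have h2 := ln1p_le_neg _ h1.
  have h3 : eps * ln (1 + expR ((x - c) / eps)) <= eps * ln 2 by rewrite ler_pM2l.
  lra.
right.
have h1 : 0 <= (x - c) / eps by rewrite divr_ge0 ?subr_ge0 ?ltW.
have h2 := ln1p_le_pos _ h1.
have h3 : eps * ln (1 + expR ((x - c) / eps)) <= eps * ((x - c) / eps + ln 2)
  by rewrite ler_pM2l.
rewrite mulrDr E in h3.
lra.
Qed.

Lemma dist_fst (p p' : R * R) : p.2 = p'.2 -> dist2 p p' = `|p.1 - p'.1|.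
Proof. by move=> e; rewrite /dist2 e subrr expr0n /= addr0 sqrtr_sqr. Qed.

Lemma dist_snd (p p' : R * R) : p.1 = p'.1 -> dist2 p p' = `|p.2 - p'.2|.
Proof. by move=> e; rewrite /dist2 e subrr expr0n /= add0r sqrtr_sqr. Qed.

End Aux.

Theorem proposition2 (R : realType) (qlo qhi vlo vhi v0 : R) :
  qlo <= qhi -> vlo <= vhi -> vlo <= v0 <= vhi ->
  (forall eps : R, 0 < eps ->
     Sset qlo qhi vlo vhi v0 `<=` Seps qlo qhi vlo vhi v0 eps) /\
  (deviation qlo qhi vlo vhi v0 eps @[eps --> 0^'+] --> 0%E).
Proof.
move=> hq hv /andP[hv0l hv0h].
have l2 := ln2_gt0 R.
have part1 : forall eps : R, 0 < eps ->
     Sset qlo qhi vlo vhi v0 `<=` Seps qlo qhi vlo vhi v0 eps.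
  move=> eps he [q v]; rewrite /Sset /Seps /= => H.
  have gen : forall x c : R, x - eps * ln (1 + expR ((x - c) / eps)) <= x - (x - c).
    move=> x c; have := @ln1p_ge R ((x - c) / eps).
    rewrite -(ler_pM2l he) mulrC divfK ?gt_eqF //; lra.
  have e2 : 0 < eps * ln 2 by rewrite mulr_gt0.
  have gen' : forall x c d : R, d = x - c ->
      x - eps * ln (1 + expR (d / eps)) <= eps * ln 2 + c.
    by move=> x c d ->; have := gen x c; lra.
  have gen0 : forall d : R, 0 - eps * ln (1 + expR (d / eps)) <= eps * ln 2.
    move=> d; have : 0 <= ln (1 + expR (d / eps)).
      by apply: ln_ge0; rewrite lerDl expR_ge0.
    move=> h; have : 0 <= eps * ln (1 + expR (d / eps)) by rewrite mulr_ge0 // ltW.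
    lra.
  case: H => [[/andP[h1 h2] ->]|[[-> /andP[h1 h2]]|[-> /andP[h1 h2]]]].
  - exists 0, 0.
    have g1 := gen0 (0 - q + qlo).
    have g2 := gen0 (0 + q - qhi).
    repeat split; lra.
  - exists 0, (v0 - v).
    have g1 := gen0 (0 - qhi + qlo).
    have g2 := gen' (v0 - v) 0 (v0 - v + qhi - qhi) ltac:(ring).
    repeat split; lra.
  - exists (v - v0), 0.
    have g1 := gen' (v - v0) 0 (v - v0 - qlo + qlo) ltac:(ring).
    have g2 := gen0 (0 + qlo - qhi).
    repeat split; lra.
split => //.
have ub : forall eps : R, 0 < eps -> forall p, Seps qlo qhi vlo vhi v0 eps p ->
    exists2 p', Sset qlo qhi vlo vhi v0 p' & dist2 p p' <= 2 * eps * ln 2.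
  move=> eps he [q v] [vp [vm [hp [hm [ev [c1 [c2 [/andP[q1 q2] /andP[w1 w2]]]]]]]]].
  rewrite /= in ev c1 c2 q1 q2 w1 w2.
  rewrite (_ : vp - q + qlo = vp - (q - qlo)) in c1; last by ring.
  rewrite (_ : vm + q - qhi = vm - (qhi - q)) in c2; last by ring.
  have k1 := @key R _ _ _ he c1; have k2 := @key R _ _ _ he c2.
  have [vv|vv] := lerP v0 v.
  + case: k1 => k1.
    * exists (q, v0); first by left => /=; rewrite q1 q2.
      rewrite dist_snd //= ger0_norm; lra.
    * exists (qlo, v); first by right; right => /=; rewrite vv w2.
      rewrite dist_fst //= ger0_norm; lra.
  + case: k2 => k2.
    * exists (q, v0); first by left => /=; rewrite q1 q2.
      rewrite dist_snd //= ler0_norm; lra.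
    * exists (qhi, v); first by right; left => /=; rewrite w1 ltW.
      rewrite dist_fst //= ler0_norm; lra.
have bnd : forall eps : R, 0 < eps ->
    (0 <= deviation qlo qhi vlo vhi v0 eps <= (2 * eps * ln 2)%:E)%E.
  move=> eps he; apply/andP; split.
    apply: le_ereal_sup_tmp.
    exists (ereal_inf [set (dist2 (qlo, v0) p')%:E | p' in Sset qlo qhi vlo vhi v0]).
      exists (qlo, v0) => //; apply: (part1 eps he).
      by left => /=; rewrite lexx hq.
    apply: le_ereal_inf_tmp => _ [p' _ <-].
    by rewrite lee_fin sqrtr_ge0.
  apply: ge_ereal_sup => _ [p hp <-].
  have [p' hp' hd] := ub eps he p hp.
  apply: ge_ereal_inf; exists (dist2 p p')%:E; first by exists p'.
  by rewrite lee_fin.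
apply: (squeeze_cvge (f := fun=> 0%E) (h := fun eps : R => (2 * eps * ln 2)%:E)).
- near=> eps; apply: bnd; near: eps; exact: nbhs_right_gt.
- exact: cvg_cst.
- apply: cvg_EFin; first by near=> eps.
  apply: cvg_at_right_filter.
  rewrite /comp /=.
  have := cvgMr_tmp (b := ln (2:R)) (cvgMl_tmp (a := (2:R)) (@cvg_id _ (nbhs (0:R)))).
  rewrite mulr0 mul0r; apply; exact: nbhs_filter.
Unshelve. all: by end_near.
Qed.
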